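(* Let $d\ge 2$ and let $H$ be the class of decision trees of height at most $d$ over $\mathrm{dim}$-dimensional inputs in which nodes are permitted to test the same dimension as their ancestors. Then for any dataset of $n$ distinct points, the disagreement coefficient of $H$ satisfies $\theta=\Omega(n^{1/\mathrm{dim}})$.
   Context: A decision tree routes a point $x\in\mathbb{R}^{\mathrm{dim}}$ from the root; each internal node compares one coordinate $x_a$ with a threshold, each leaf carries a label in $\{0,1\}$. For a dataset $S$ of $n$ points: $D_S(h,h')=\frac1n\sum_{x\in S}\mathbb{I}(h(x)\ne h'(x))$, $B_H(h,r)=\{h'\in H:D_S(h,h')\le r\}$, $\mathrm{DIS}_S(V)=\{x\in S:\exists h_1,h_2\in V,h_1(x)\ne h_2(x)\}$, $\theta_h=\sup_{r>0}\frac{|\mathrm{DIS}_S(B_H(h,r))|}{rn}$, $\theta=\sup_{h\in H}\theta_h$. *)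

(* Defs.v *)
From HB Require Import structures.
From mathcomp Require Import all_boot all_order all_algebra.
From mathcomp Require Import all_classical all_reals all_analysis.
Set Implicit Arguments. Unset Strict Implicit. Unset Printing Implicit Defensive.
Import Order.TTheory GRing.Theory Num.Theory.
Local Open Scope classical_set_scope.
Local Open Scope ring_scope.

Section DT.
Variables (R : realType) (dim : nat).

Definition point := 'rV[R]_dim.

(* No restriction on which coordinates may be tested (repetition allowed). *)
Inductive dtree : Type :=
| Leaf of bool
| Node of 'I_dim & R & dtree & dtree.

Fixpoint dt_eval (T : dtree) (x : point) : bool :=
  match T with
  | Leaf b => b
  | Node a t l r => if x ord0 a <= t then dt_eval l x else dt_eval r x
  end.

Fixpoint dt_height (T : dtree) : nat :=
  match T with
  | Leaf _ => 0
  | Node _ _ l r => (maxn (dt_height l) (dt_height r)).+1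
  end.

Definition DT_class (d : nat) : set (point -> bool) :=
  [set f | exists T : dtree, (dt_height T <= d)%N /\ f = dt_eval T].

Variables (n : nat) (S : 'I_n -> point).

Definition DS (h h' : point -> bool) : R :=
  #|[set i : 'I_n | h (S i) != h' (S i)]|%:R / n%:R.

Definition ballH (H : set (point -> bool)) (h : point -> bool) (r : R)
  : set (point -> bool) := [set h' | H h' /\ DS h h' <= r].

Definition card_DIS (V : set (point -> bool)) : nat :=
  #|[set i : 'I_n | `[< exists h1 h2, V h1 /\ V h2 /\ h1 (S i) <> h2 (S i) >]]|.

Definition theta_h (H : set (point -> bool)) (h : point -> bool) : \bar R :=
  ereal_sup [set ((card_DIS (ballH H h r))%:R / (r * n%:R))%:E
            | r in [set r : R | 0 < r]].

Definition theta (H : set (point -> bool)) : \bar R :=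
  ereal_sup [set theta_h H h | h in H].

End DT.

(* Main.v *)
Require Import Defs.
From HB Require Import structures.
From mathcomp Require Import all_boot all_order all_algebra.
From mathcomp Require Import all_classical all_reals all_analysis.
From mathcomp Require Import lra zify.
From Stdlib Require Import Lia.
Import Order.TTheory GRing.Theory Num.Theory.
Local Open Scope classical_set_scope.
Local Open Scope ring_scope.

Local Close Scope classical_set_scope.
Section Comb.
Variables (R : realType) (dim n : nat) (S : 'I_n -> 'rV[R]_dim).

Definition cls (a : 'I_dim) (i : 'I_n) : {set 'I_n} :=
  [set j | S j ord0 a == S i ord0 a].

Lemma cls_eq a i j : (cls a i == cls a j) = (S i ord0 a == S j ord0 a).
Proof.
apply/eqP/eqP => [E|E].
- have : i \in cls a j by rewrite -E finset.inE.
  by rewrite finset.inE => /eqP.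
- by apply/setP => x; rewrite !finset.inE E.
Qed.

Variable k : nat.
Definition G a : {pred 'I_n} := fun i => (k < #|cls a i|)%N.
Definition F a := [set cls a i | i in G a].

Lemma F_bound a : (#|F a| * k.+1 <= n)%N.
Proof.
have H1 : (#|G a| <= n)%N by rewrite -[X in (_ <= X)%N]card_ord; exact: max_card.
apply: leq_trans H1.
rewrite -[#|G a|]sum1_card (partition_big_imset (cls a)) -/(F a) /=.
apply: (@leq_trans (\sum_(C in F a) k.+1)%N); first by rewrite sum_nat_const.
apply: leq_sum => C /imsetP [i0 Hi0 ->].
have Hi1 := Hi0; apply: leq_trans Hi0 _.
rewrite (eq_bigl (fun i => (i \in G a) && (cls a i == cls a i0))) //.
rewrite sum1dep_card; apply: subset_leq_card; apply/fintype.subsetP => j.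
rewrite !finset.inE => Ej; rewrite cls_eq Ej andbT.
have E : cls a j = cls a i0 by apply/eqP; rewrite cls_eq.
by move: Hi1; rewrite !unfold_in /G /= E.
Qed.

Definition Bad := [set i | [forall a, i \in G a]].

Lemma Bad_bound : injective S -> (#|Bad| <= \prod_(a : 'I_dim) #|F a|)%N.
Proof.
move=> injS.
pose g i : {ffun 'I_dim -> {set 'I_n}} := [ffun a => cls a i].
have ginj : injective g.
  move=> i j /ffunP E; apply: injS; apply/rowP => a.
  have := E a; rewrite !ffunE => /eqP; rewrite cls_eq => /eqP.
  by have -> : (0 : 'I_1) = ord0 by apply/val_inj.
rewrite -(card_imset _ ginj).
have -> : (\prod_(a : 'I_dim) #|F a| = #|family (fun a => F a)|)%N.
  by rewrite card_family foldrE big_map big_enum.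
apply: subset_leq_card; apply/fintype.subsetP => _ /imsetP [i Hi ->].
apply/familyP => a; rewrite ffunE; apply: imset_f.
by rewrite finset.inE in Hi; move/forallP: Hi.
Qed.

Lemma main_count : injective S -> (#|Bad| * k.+1 ^ dim <= n ^ dim)%N.
Proof.
move=> injS.
apply: (@leq_trans ((\prod_(a : 'I_dim) #|F a|) * \prod_(a : 'I_dim) k.+1)%N).
  by rewrite prod_nat_const card_ord leq_mul2r Bad_bound ?orbT.
rewrite -big_split /=.
apply: (@leq_trans (\prod_(a : 'I_dim) n)%N); first by apply: leq_prod => a _; exact: F_bound.
by rewrite prod_nat_const card_ord.
Qed.


Lemma tree_exists (a : 'I_dim) (v : R) : exists T : dtree R dim,
  dt_height T = 2%N /\ forall j, dt_eval T (S j) = (S j ord0 a == v).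
Proof.
pose t' := \big[Order.Def.max/(v-1)]_(j | S j ord0 a < v) S j ord0 a.
have t'lt : t' < v by rewrite /t'; apply: bigmax_lt => //; lra.
have t'ge j : S j ord0 a < v -> S j ord0 a <= t'.
  move=> H; rewrite /t'. exact: (@le_bigmax_cond _ R _ (v-1) j (fun j => S j ord0 a < v) (fun j => S j ord0 a) H).
exists (Node a v (Node a t' (Leaf R dim false) (Leaf R dim true)) (Leaf R dim false)).
split => // j /=.
case: (ltgtP (S j ord0 a) v) => H.
- by rewrite (t'ge _ H).
- by [].
- by rewrite H leNgt t'lt.
Qed.

Lemma dis_bound d : (2 <= d)%N ->
  (n - #|Bad| <= card_DIS S (ballH S (DT_class d) (dt_eval (Leaf R dim false)) (k%:R / n%:R)))%N.
Proof.
move=> d2; rewrite /card_DIS.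
apply: (@leq_trans #|~: Bad|); first by rewrite [#|~: _|]cardsCs finset.setCK card_ord.
apply: subset_leq_card; apply/fintype.subsetP => i.
rewrite !finset.inE negb_forall => /existsP [a Ha].
rewrite in_setE /=; apply/asboolP.
have [T [hT eT]] := tree_exists a (S i ord0 a).
exists (dt_eval (Leaf R dim false)), (dt_eval T); split; [|split].
- split; first by exists (Leaf R dim false).
  rewrite /DS eq_card0 ?mul0r ?divr_ge0 //.
  move=> j; apply/idP/idP => //; apply/negP; rewrite in_setE /=.
  by [].
- split; first by exists T; rewrite hT.
  rewrite /DS (@eq_card _ _ (cls a i)); last first.
    move=> j; rewrite finset.inE -eT.
    apply/idP/idP => [|H]; rewrite in_setE /=.
      by case: (dt_eval T (S j)).
    by rewrite H.
  apply: ler_wpM2r; first by rewrite invr_ge0.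
  rewrite ler_nat; move: Ha; by rewrite unfold_in /G -leqNgt.
- by rewrite /= eT eqxx.
Qed.
End Comb.

Local Open Scope classical_set_scope.

Theorem theorem3 (R : realType) (dim d : nat) :
  (1 <= dim)%N -> (2 <= d)%N ->
  exists2 c : R, 0 < c &
    forall (n : nat) (S : 'I_n -> 'rV[R]_dim),
      (0 < n)%N -> injective S ->
      ((c * (n%:R `^ (dim%:R)^-1))%:E <= @theta R dim n S (@DT_class R dim d))%E.
Proof.
move=> dim1 d2.
exists (16%:R^-1); first by rewrite invr_gt0 ltr0n.
move=> n S n0 injS.
have [m [m1 [mle mgt]]] : exists m, [/\ (1 <= m)%N, (m ^ dim <= n)%N & (n < m.+1 ^ dim)%N].
  have ex : exists p, (n < p ^ dim)%N.
    exists n.+1; apply: (@leq_trans (n.+1 ^ 1)); first by rewrite expn1.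
    by rewrite leq_pexp2l.
  case: (ex_minnP ex) => p Hp Hmin.
  have p2 : (1 < p)%N.
    move: Hp; case: p Hmin => [|[|p]] //= _; first by rewrite exp0n // ltn0.
    by rewrite exp1n ltnNge n0.
  exists p.-1; split; first by case: p p2 {Hp Hmin}.
    rewrite leqNgt; apply/negP => H; have := Hmin _ H; case: p p2 {Hp Hmin H} => // p _ /=; lia.
  by rewrite prednK //; case: p p2 {Hp Hmin}.
have mn : (m <= n)%N.
  apply: leq_trans mle; apply: (@leq_trans (m ^ 1)); first by rewrite expn1.
  by rewrite leq_pexp2l.
set k := (2 * (n %/ m)).+1.
have Hcount := @main_count R dim n S k injS.
have hdm := divn_eq n m.
have hmod : (n %% m < m)%N by rewrite ltn_pmod.
have km : (k * m <= 3 * n)%N.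
  rewrite /k; set q := (n %/ m)%N in hdm *; set r := (n %% m)%N in hdm hmod *; nia.
have k1m : (2 * n <= k.+1 * m)%N.
  rewrite /k; set q := (n %/ m)%N in hdm *; set r := (n %% m)%N in hdm hmod *; nia.
have Bad2 : (2 * #|@Bad R dim n S k| <= n)%N.
  have P0 : (0 < n ^ dim)%N by rewrite expn_gt0 n0.
  have e1 : (2 * n ^ dim <= k.+1 ^ dim * m ^ dim)%N.
    rewrite -expnMn; apply: (@leq_trans ((2 * n) ^ dim)%N); last by rewrite leq_exp2r // lt0n -lt0n.
    rewrite expnMn leq_mul2r; apply/orP; right.
    by apply: (@leq_trans (2 ^ 1)%N) => //; rewrite leq_pexp2l.
  move: Hcount e1 P0 mle.
  set B := #|_|; set Q := (k.+1 ^ dim)%N; set M := (m ^ dim)%N; set P := (n ^ dim)%N.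
  move=> h1 h2 h3 h4.
  have h5 : (B * Q * M <= P * n)%N.
    apply: (@leq_trans (P * M)%N); [by rewrite leq_mul2r h1 orbT | by rewrite leq_mul2l h4 orbT].
  have h6 : (2 * B * P <= P * n)%N.
    apply: leq_trans h5; rewrite [(2 * B)%N]mulnC -!mulnA leq_mul2l h2 orbT //.
  by rewrite -(@leq_pmul2r P) // [(n * P)%N]mulnC.
have Hdis := @dis_bound R dim n S k d d2.
set r := (k%:R / n%:R : R).
set h0 := dt_eval (Leaf R dim false).
set D := card_DIS S (ballH S (DT_class d) h0 r).
have Dn : (n <= 2 * D)%N by move: Hdis; rewrite -/h0 -/r -/D; lia.
apply: (@le_trans _ _ (theta_h S (DT_class d) h0)); last first.
  by apply: ereal_sup_ubound; exists h0 => //; exists (Leaf R dim false).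
apply: (@le_trans _ _ ((D%:R / (r * n%:R))%:E)); last first.
  apply: ereal_sup_ubound; exists r => //.
  by rewrite /= /r divr_gt0 // ltr0n.
rewrite lee_fin.
have rn : r * n%:R = k%:R by rewrite /r divfK // pnatr_eq0 -lt0n.
rewrite rn.
have x_le : (n%:R : R) `^ (dim%:R)^-1 <= (m.+1)%:R.
  have H : (n%:R : R) <= (m.+1)%:R ^+ dim by rewrite -natrX ler_nat ltnW.
  have r0 : (0 : R) <= (dim%:R)^-1 by rewrite invr_ge0 ler0n.
  have hx : (n%:R : R) \in Num.nneg by rewrite nnegrE ler0n.
  have hy : ((m.+1)%:R ^+ dim : R) \in Num.nneg by rewrite nnegrE exprn_ge0 // ler0n.
  apply: (le_trans (ge0_ler_powR r0 hx hy H)).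
  rewrite -powR_mulrn ?ler0n // -powRrM mulfV ?powRr1 ?ler0n //.
  by rewrite pnatr_eq0 -lt0n.
have x0 : 0 <= n%:R `^ (dim%:R)^-1 :> R by apply: powR_ge0.
have k0 : (0 < k%:R :> R) by rewrite ltr0n.
rewrite ler_pdivlMr //.
have km' : (k%:R * m%:R <= 3 * n%:R :> R).
  by rewrite -natrM -(natrM _ 3) ler_nat.
have Dn' : (n%:R <= 2 * D%:R :> R) by rewrite -(natrM _ 2) ler_nat.
have m1' : (1 <= m%:R :> R) by rewrite ler1n.
rewrite -addn1 natrD in x_le.
set x := n%:R `^ _ in x_le x0 *.
nra.
Qed.
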